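(* For every $n\in\mathbb{N}$ and every $l\in\{0,1,\dots,5\}$ there is a triangle-free outerplanar graph $G$ with $|V(G)|>n$, $|V_1(G)|=l$ and $\rho_G^3=3$ that has no equitable $3$-coloring.
   Context: For a graph $G$, $V_1(G)$ is the set of vertices of degree $1$, and for $A\subseteq V(G)$, $\|G[A]\|$ is the number of edges of $G[A]$. Define $\rho_G^3(A)=6\|G[A]\|-7|A|+3|A\cap V_1(G)|$ and $\rho_G^3=\max_{A\subseteq V(G)}\rho_G^3(A)$ (including $A=\emptyset$). An equitable $3$-coloring is a proper vertex coloring with $3$ colors in which the sizes of any two color classes differ by at most $1$. *)

(* Defs.v *)
From mathcomp Require Import all_boot all_order all_algebra.
Set Implicit Arguments. Unset Strict Implicit. Unset Printing Implicit Defensive.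
Import Order.TTheory GRing.Theory Num.Theory.

Section Graphs.
Variables (T : finType) (e : rel T).

Definition simple_graph : Prop := symmetric e /\ irreflexive e.

Definition triangle_free : Prop := forall x y z, ~ [&& e x y, e y z & e x z].

(* Outerplanar: the vertices can be placed in distinct positions on a circle
   (injective position map pos) so that no two edges, drawn as chords, cross;
   edges {a,b} and {c,d} cross iff pos a < pos c < pos b < pos d. *)
Definition outerplanar : Prop :=
  exists pos : T -> nat, injective pos /\
    forall a b c d, e a b -> e c d ->
      ~ [&& pos a < pos c, pos c < pos b & pos b < pos d].

Definition deg (x : T) : nat := #|[set y | e x y]|.
Definition V1 : {set T} := [set x | deg x == 1].

(* number of edges of G[A] (each edge counted once = ordered pairs / 2) *)
Definition edges_in (A : {set T}) : nat :=
  #|[set p : T * T | [&& p.1 \in A, p.2 \in A & e p.1 p.2]]| %/ 2.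

Definition rho3A (A : {set T}) : int :=
  (6 * (edges_in A)%:Z - 7 * (#|A|)%:Z + 3 * (#|A :&: V1|)%:Z)%R.

(* max over all A (including the empty set, whose value is 0) *)
Definition rho3 : int := \big[Order.max/0%R]_(A : {set T}) rho3A A.

Definition proper_coloring (k : nat) (c : T -> 'I_k) : Prop :=
  forall x y, e x y -> c x != c y.

Definition equitable_coloring (k : nat) (c : T -> 'I_k) : Prop :=
  proper_coloring c /\
  forall i j : 'I_k, #|[set x | c x == i]| <= #|[set x | c x == j]| + 1.

End Graphs.

(* Main.v *)
Require Import Defs.
From mathcomp Require Import all_boot all_order all_algebra.
Import GRing.Theory Num.Theory.
From mathcomp Require Import zify.
Set Implicit Arguments. Unset Strict Implicit.

Section G.
Variables (L p : nat).
Hypothesis HL : L <= 5.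
Hypothesis Hp : 0 < p.

Definition F := 5 - L.
Definition K := L + F * 4.
Definition M := K + p * 6.

Definition leafn y := (0 < y) && (y <= L).
Definition in5 y := (L < y) && (y <= K).
Definition in7 y := K < y.
Definition startn y := [|| leafn y, in5 y && ((y - L.+1) %% 4 == 0) | in7 y && ((y - K.+1) %% 6 == 0)].
Definition endn y := [|| leafn y, in5 y && ((y - L.+1) %% 4 == 3) | in7 y && ((y - K.+1) %% 6 == 5)].
Definition endpt y := startn y || endn y.
Definition adjn x y := [|| (x == 0) && (0 < y) && endpt y, (y == 0) && (0 < x) && endpt x,
   (0 < x) && ~~ endn x && (y == x.+1) | (0 < y) && ~~ endn y && (x == y.+1)].

Lemma adjnC x y : adjn x y = adjn y x.
Proof. rewrite /adjn; by case: (_ && _); case: (_ && _); case: (_ && _); case: (_ && _). Qed.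

Lemma adjn_irr x : adjn x x = false.
Proof. rewrite /adjn; apply/negbTE; rewrite !negb_or; repeat (apply/andP; split); lia. Qed.

Ltac unf := rewrite /startn /endn /leafn /in5 /in7 /K /F.

Lemma key y : 0 < y -> endpt y -> ~~ endn y -> ~~ endpt y.+1.
Proof.
rewrite /endpt; unf => y0.
case/orP => //; case/or3P => [->//| /andP[A B] | /andP[A B]];
rewrite !negb_or !negb_and; move=> /andP [_ /andP[C D]];
repeat (apply/andP; split); lia.
Qed.

Lemma adj_shape x y : adjn x y -> [\/ x = 0 /\ 0 < y, y = 0 /\ 0 < x, y = x.+1 | x = y.+1].
Proof.
rewrite /adjn; case/or4P => /andP[]; [move=>/andP[/eqP-> ?] _ | move=>/andP[/eqP-> ?] _
 | move=> _ /eqP-> | move=> _ /eqP->]; by [constructor 1|constructor 2|constructor 3|constructor 4].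
Qed.

Lemma adj0 y : adjn 0 y = (0 < y) && endpt y.
Proof. rewrite /adjn /=; case: (_ && _) => //=; rewrite !andbF. by []. Qed.

Lemma adj_pos x y : 0 < x -> 0 < y -> adjn x y = (~~ endn x && (y == x.+1)) || (~~ endn y && (x == y.+1)).
Proof.
move=> x0 y0; rewrite /adjn x0 y0 /=.
have -> : (x == 0) = false by lia.
have -> : (y == 0) = false by lia.
by [].
Qed.

Lemma notri0 y z : adjn 0 y -> adjn 0 z -> adjn y z -> False.
Proof.
rewrite !adj0 => /andP[y0 ey] /andP[z0 ez]; rewrite adj_pos //.
case/orP => /andP[ne /eqP E]; subst.
- by move: (key y0 ey ne); rewrite ez.
- by move: (key z0 ez ne); rewrite ey.
Qed.

Lemma tri x y z : ~ [&& adjn x y, adjn y z & adjn x z].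
Proof.
case/and3P=> a b c.
have [Ex|x0] := posnP x; first by subst; exact: (notri0 a c b).
have [Ey|y0] := posnP y; first by subst; rewrite adjnC in a; exact: (notri0 a b c).
have [Ez|z0] := posnP z; first (subst; rewrite adjnC in a; rewrite adjnC in b; rewrite adjnC in c; idtac; exact: (notri0 b c a)).
case/adj_shape: a => [[]|[]|?|?]; try lia;
case/adj_shape: b => [[]|[]|?|?]; try lia;
case/adj_shape: c => [[]|[]|?|?]; lia.
Qed.

Lemma outer a b c d : adjn a b -> adjn c d -> ~ [&& a < c, c < b & b < d].
Proof.
move=> /adj_shape h1 /adj_shape h2 /and3P[h3 h4 h5].
case: h1 => [[]|[]|?|?]; case: h2 => [[]|[]|?|?]; lia.
Qed.

Lemma ev5 j i : j < F -> i < 4 ->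
  [/\ leafn (L.+1 + j*4 + i) = false, startn (L.+1 + j*4 + i) = (i == 0) & endn (L.+1 + j*4 + i) = (i == 3)].
Proof.
move=> jF i4.
have m4 : (L.+1 + j*4 + i - L.+1) %% 4 = i by rewrite -addnA addKn modnMDl modn_small.
have l0 : leafn (L.+1 + j*4 + i) = false by rewrite /leafn; lia.
have i5 : in5 (L.+1 + j*4 + i) by rewrite /in5 /K; move: jF; rewrite /F; lia.
have i7 : in7 (L.+1 + j*4 + i) = false by rewrite /in7 /K; move: jF; rewrite /F; lia.
by rewrite /startn /endn l0 i5 i7 m4 /= ?orbF.
Qed.

Lemma ev7 j i : j < p -> i < 6 ->
  [/\ leafn (K.+1 + j*6 + i) = false, startn (K.+1 + j*6 + i) = (i == 0) & endn (K.+1 + j*6 + i) = (i == 5)].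
Proof.
move=> jF i6.
have m6 : (K.+1 + j*6 + i - K.+1) %% 6 = i by rewrite -addnA addKn modnMDl modn_small.
have l0 : leafn (K.+1 + j*6 + i) = false by rewrite /leafn /K; lia.
have i5 : in5 (K.+1 + j*6 + i) = false by rewrite /in5; lia.
have i7 : in7 (K.+1 + j*6 + i) by rewrite /in7; lia.
by rewrite /startn /endn l0 i5 i7 m6 /= ?orbF ?andbF.
Qed.

Lemma evl x : leafn x -> startn x /\ endn x.
Proof. by move=> h; rewrite /startn /endn h. Qed.

Lemma cls x : 0 < x <= M -> [\/ leafn x,
  exists j i, [/\ j < F, i < 4 & x = L.+1 + j*4 + i] |
  exists j i, [/\ j < p, i < 6 & x = K.+1 + j*6 + i]].
Proof.
move=> /andP[x0 xM].
case: (leqP x L) => xL; first by constructor 1; rewrite /leafn x0 xL.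
case: (leqP x K) => xK.
  constructor 2; exists ((x - L.+1) %/ 4), ((x - L.+1) %% 4).
  have := divn_eq (x - L.+1) 4; have := ltn_pmod (x - L.+1) (isT : 0 < 4).
  move: xK; rewrite /K /F; split; lia.
constructor 3; exists ((x - K.+1) %/ 6), ((x - K.+1) %% 6).
have := divn_eq (x - K.+1) 6; have := ltn_pmod (x - K.+1) (isT : 0 < 6).
move: xM; rewrite /M; split; lia.
Qed.

Lemma leaf0 : leafn 0 = false. Proof. by []. Qed.
Lemma start0 : startn 0 = false. Proof. by rewrite /startn /in5 /in7. Qed.
Lemma end0 : endn 0 = false. Proof. by rewrite /endn /in5 /in7. Qed.

Lemma leaf_adj x y : leafn x -> adjn x y = (y == 0).
Proof.
move=> h; have [s e] := evl h; have x0 : 0 < x by move: h; rewrite /leafn; lia.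
have [->|y0] := posnP y; first by rewrite adjnC adj0 x0 /endpt s.
rewrite adj_pos // e /=; apply/negbTE; apply/negP => /andP[ne /eqP E].
have ly : leafn y by move: h; rewrite /leafn E; lia.
by move: ne; rewrite (evl ly).2.
Qed.

Lemma blk_two b s i : 0 < b -> 1 < s -> i < s -> b + s <= M.+1 ->
  (forall k, k < s -> startn (b+k) = (k==0) /\ endn (b+k) = (k == s.-1)) ->
  exists y z, [/\ y != z, y <= M, z <= M, adjn (b+i) y & adjn (b+i) z].
Proof.
move=> b0 s1 iS bs H.
have [si ei] := H i iS.
have x0 : 0 < b + i by lia.
case: (eqVneq i 0) => [E|i0].
  exists 0, (b + 1); split; try lia.
    by rewrite adjnC adj0 x0 /endpt si E.
  rewrite adj_pos //; last lia. rewrite ei; apply/orP; left; apply/andP; split; lia.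
case: (eqVneq i s.-1) => [E|is1].
  exists 0, (b + i.-1); split; try lia.
    by rewrite adjnC adj0 x0 /endpt ei E eqxx orbT.
  have [_ e1] : _ := H i.-1 ltac:(lia).
  rewrite adj_pos //; last lia. rewrite e1; apply/orP; right; apply/andP; split; lia.
exists (b + i.-1), (b + i.+1); split; try lia.
  have [_ e1] : _ := H i.-1 ltac:(lia).
  rewrite adj_pos //; last lia. rewrite e1; apply/orP; right; apply/andP; split; lia.
rewrite adj_pos //; last lia. rewrite ei; apply/orP; left; apply/andP; split; lia.
Qed.

Lemma endptM : endpt M.
Proof.
have -> : M = K.+1 + p.-1*6 + 5 by rewrite /M; lia.
rewrite /endpt; have [_ _ ->] := ev7 (j:=p.-1) (i:=5) ltac:(lia) isT. by rewrite orbT.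
Qed.

Lemma endpt1 : endpt 1.
Proof.
case: (posnP L) => L0.
  have -> : 1 = L.+1 + 0*4 + 0 by lia.
  rewrite /endpt; have [_ -> _] := ev5 (j:=0) (i:=0) ltac:(rewrite /F; lia) isT. by [].
by rewrite /endpt /startn /leafn L0.
Qed.

Lemma nonleaf_two x : x <= M -> ~~ leafn x ->
  exists y z, [/\ y != z, y <= M, z <= M, adjn x y & adjn x z].
Proof.
move=> xM nl.
have [Ex|x0] := posnP x.
  subst; exists 1, M; split; rewrite ?adj0 ?endptM ?endpt1 ?andbT //; rewrite /M /K; lia.
case: (cls (x:=x) ltac:(lia)) => [l|[j [i [jF i4 ->]]]|[j [i [jF i6 ->]]]].
- by rewrite l in nl.
- apply: (blk_two (s:=4)); try (have := jF; rewrite /M /K /F; lia).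
  by move=> k k4; have [_ -> ->] := ev5 jF k4.
- apply: (blk_two (s:=6)); try (have := jF; rewrite /M /K /F; lia).
  by move=> k k6; have [_ -> ->] := ev7 jF k6.
Qed.

Definition E : rel 'I_M.+1 := fun x y => adjn x y.

Lemma V1E : V1 E = [set x : 'I_M.+1 | leafn x].
Proof.
apply/setP => x; rewrite !inE /deg.
case: (boolP (leafn x)) => h.
  suff -> : [set y | E x y] = [set ord0] by rewrite cards1.
  apply/setP => y; rewrite !inE /E leaf_adj //.
have [y [z [yz yM zM ay az]]] := nonleaf_two (ltn_ord x : x <= M) h.
apply/negbTE; rewrite neq_ltn; apply/orP; right.
apply/card_gt1P; exists (inord y), (inord z); rewrite !inE /E !inordK //; split=> //.
apply/negP => /eqP /(f_equal val) /=; rewrite !inordK //; by apply/eqP.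
Qed.

End G.

Lemma msum_shift c s (f : nat -> nat) : \sum_(c <= y < c + s) f y = \sum_(i < s) f (c + i).
Proof.
rewrite -{1}(add0n c) big_addn addKn big_mkord; apply: eq_bigr => i _; by rewrite addnC.
Qed.

Lemma sum_blk a s q (f : nat -> nat) :
  \sum_(a <= y < a + q*s) f y = \sum_(j < q) \sum_(i < s) f (a + j*s + i).
Proof.
elim: q => [|q IH]; first by rewrite mul0n addn0 big_ord0 big_geq.
rewrite big_ord_recr /= -IH (big_cat_nat (n := a + q*s)) /=; try lia.
rewrite mulSnr addnA; congr (_ + _); apply: msum_shift.
Qed.

Lemma collapse m c (G : nat -> nat) :
  \sum_(0 <= x < m) ((x == c) * G x) = (c < m) * G c.
Proof.
elim: m => [|m IH]; first by rewrite big_geq.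
rewrite big_nat_recr //= IH; case: (eqVneq m c) => [->|ne].
  by rewrite ltnn ltnSn mul0n mul1n add0n.
rewrite mul0n addn0; congr (_ * _); lia.
Qed.

Section S.
Variables (L p : nat).
Hypothesis HL : L <= 5.
Hypothesis Hp : 0 < p.
Local Notation m := (M L p).+1.
Local Notation adj := (adjn L).

Definition An (A : {set 'I_m}) y := (y < m) && (inord y \in A).

Lemma An_ord A (x : 'I_m) : An A x = (x \in A).
Proof. by rewrite /An ltn_ord inord_val. Qed.

Lemma card_pairs (A : {set 'I_m}) :
  #|[set pr : 'I_m * 'I_m | [&& pr.1 \in A, pr.2 \in A & @E L p pr.1 pr.2]]| =
  \sum_(0 <= x < m) \sum_(0 <= y < m) (An A x && An A y && adj x y).
Proof.
rewrite -sum1_card big_mkcond /=.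
rewrite big_mkord (eq_bigr (fun x : 'I_m => \sum_(y < m) ((x \in A) && (y \in A) && adj x y : nat))); last first.
  by move=> x _; rewrite big_mkord; apply: eq_bigr => y _; rewrite !An_ord.
rewrite pair_bigA; apply: eq_bigr => [[x y]] _; rewrite inE /=.
by rewrite /E andbA; case: (_ && _ && _).
Qed.

Definition E0 A := \sum_(0 <= y < m) (An A 0 && An A y && (0 < y) && endpt L y).
Definition E1 A := \sum_(0 <= x < m) (An A x && (0 < x) && ~~ endn L x && (x.+1 < m) && An A x.+1).

Lemma term_split A x y : (An A x && An A y && adj x y : nat) =
  (x == 0) * (An A x && An A y && (0 < y) && endpt L y)
  + (y == 0) * (An A x && An A y && (0 < x) && endpt L x)
  + (y == x.+1) * (An A x && (0 < x) && ~~ endn L x && An A y)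
  + (x == y.+1) * (An A y && (0 < y) && ~~ endn L y && An A x).
Proof. rewrite /adjn; lia. Qed.

Lemma pairs_E A : \sum_(0 <= x < m) \sum_(0 <= y < m) (An A x && An A y && adj x y) = 2 * (E0 A + E1 A).
Proof.
rewrite (eq_bigr (fun x => \sum_(0 <= y < m) ((x == 0) * (An A x && An A y && (0 < y) && endpt L y))
  + \sum_(0 <= y < m) ((y == 0) * (An A x && An A y && (0 < x) && endpt L x))
  + \sum_(0 <= y < m) ((y == x.+1) * (An A x && (0 < x) && ~~ endn L x && An A y))
  + \sum_(0 <= y < m) ((x == y.+1) * (An A y && (0 < y) && ~~ endn L y && An A x)))); last first.
  by move=> x _; rewrite -!big_split /=; apply: eq_bigr => y _; rewrite term_split.
rewrite !big_split /=.
have e1 : \sum_(0 <= x < m) \sum_(0 <= y < m) ((x == 0) * (An A x && An A y && (0 < y) && endpt L y)) = E0 A.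
  rewrite exchange_big_nat /=; apply: eq_bigr => y _.
  by rewrite (collapse _ _ (fun x => (An A x && An A y && (0 < y) && endpt L y))) mul1n.
have e2 : \sum_(0 <= x < m) \sum_(0 <= y < m) ((y == 0) * (An A x && An A y && (0 < x) && endpt L x)) = E0 A.
  apply: eq_bigr => x _.
  rewrite (collapse _ _ (fun y => (An A x && An A y && (0 < x) && endpt L x))) mul1n.
  by case: (An A x); case: (An A 0).
have e3 : \sum_(0 <= x < m) \sum_(0 <= y < m) ((y == x.+1) * (An A x && (0 < x) && ~~ endn L x && An A y)) = E1 A.
  apply: eq_bigr => x _.
  rewrite (collapse _ _ (fun y => (An A x && (0 < x) && ~~ endn L x && An A y))).
  lia.
have e4 : \sum_(0 <= x < m) \sum_(0 <= y < m) ((x == y.+1) * (An A y && (0 < y) && ~~ endn L y && An A x)) = E1 A.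
  rewrite exchange_big_nat /=; apply: eq_bigr => y _.
  rewrite (collapse _ _ (fun x => (An A y && (0 < y) && ~~ endn L y && An A x))).
  lia.
rewrite e1 e2 e3 e4; lia.
Qed.

Definition Gf A y := 6 * (An A 0 && An A y && endpt L y)
  + 6 * (An A y && ~~ endn L y && (y.+1 < m) && An A y.+1) + 3 * (An A y && leafn L y).

Lemma blk7 A b : (forall i, i < 6 -> [/\ leafn L (b+i) = false, startn L (b+i) = (i == 0) & endn L (b+i) = (i == 5)]) ->
  b + 5 < m ->
  \sum_(i < 6) Gf A (b + i) = 6 * (An A 0 && An A (b+0)) + 6 * (An A 0 && An A (b+5))
   + 6 * (An A (b+0) && An A (b+1)) + 6 * (An A (b+1) && An A (b+2)) + 6 * (An A (b+2) && An A (b+3))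
   + 6 * (An A (b+3) && An A (b+4)) + 6 * (An A (b+4) && An A (b+5)).
Proof.
move=> H bm.
rewrite !big_ord_recr !big_ord0 /= /Gf /endpt.
have [l0 s0 e0] := H 0 isT.
have [l1 s1 e1] := H 1 isT.
have [l2 s2 e2] := H 2 isT.
have [l3 s3 e3] := H 3 isT.
have [l4 s4 e4] := H 4 isT.
have [l5 s5 e5] := H 5 isT.
rewrite l0 s0 e0 l1 s1 e1 l2 s2 e2 l3 s3 e3 l4 s4 e4 l5 s5 e5 /=.
have lt i : i < 5 -> (b + i).+1 < m by move=> ?; apply: leq_trans bm; rewrite ltnS ltn_add2l.
rewrite (lt 0) // (lt 1) // (lt 2) // (lt 3) // (lt 4) //.
rewrite -[(b+0).+1]addnS -[(b+1).+1]addnS -[(b+2).+1]addnS -[(b+3).+1]addnS -[(b+4).+1]addnS.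
move: (An A 0) (An A (b + 0)) (An A (b + 1)) (An A (b + 2)) (An A (b + 3)) (An A (b + 4)) (An A (b + 5)).
by do 7 case.
Qed.

Lemma blk5 A b : (forall i, i < 4 -> [/\ leafn L (b+i) = false, startn L (b+i) = (i == 0) & endn L (b+i) = (i == 3)]) ->
  b + 3 < m ->
  \sum_(i < 4) Gf A (b + i) = 6 * (An A 0 && An A (b+0)) + 6 * (An A 0 && An A (b+3))
   + 6 * (An A (b+0) && An A (b+1)) + 6 * (An A (b+1) && An A (b+2)) + 6 * (An A (b+2) && An A (b+3)).
Proof.
move=> H bm.
rewrite !big_ord_recr !big_ord0 /= /Gf /endpt.
have [l0 s0 e0] := H 0 isT.
have [l1 s1 e1] := H 1 isT.
have [l2 s2 e2] := H 2 isT.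
have [l3 s3 e3] := H 3 isT.
rewrite l0 s0 e0 l1 s1 e1 l2 s2 e2 l3 s3 e3 /=.
have lt i : i < 3 -> (b + i).+1 < m by move=> ?; apply: leq_trans bm; rewrite ltnS ltn_add2l.
rewrite (lt 0) // (lt 1) // (lt 2) //.
rewrite -[(b+0).+1]addnS -[(b+1).+1]addnS -[(b+2).+1]addnS.
move: (An A 0) (An A (b + 0)) (An A (b + 1)) (An A (b + 2)) (An A (b + 3)).
by do 5 case.
Qed.

Lemma blk1 A b : leafn L b -> Gf A b = 6 * (An A 0 && An A b) + 3 * An A b.
Proof.
move=> h; have [s e] := evl h; rewrite /Gf /endpt s e h /=.
by move: (An A 0) (An A b); do 2 case.
Qed.

End S.

Lemma sum_blk' a s q n (f : nat -> nat) : n = a + q * s ->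
  \sum_(a <= y < n) f y = \sum_(j < q) \sum_(i < s) f (a + j*s + i).
Proof. by move=> ->; apply: sum_blk. Qed.

Lemma sum_le_const n (f g : nat -> nat) c : (forall j, j < n -> f j <= g j + c) ->
  \sum_(j < n) f j <= \sum_(j < n) g j + n * c.
Proof.
move=> H; have h : \sum_(j < n) f j <= \sum_(j < n) (g j + c) by apply: leq_sum => j _; apply: H.
by rewrite big_split /= sum_nat_const card_ord in h.
Qed.

Lemma sum_eq_const n (f g : nat -> nat) c : (forall j, j < n -> f j = g j + c) ->
  \sum_(j < n) f j = \sum_(j < n) g j + n * c.
Proof.
move=> H; rewrite (eq_bigr (fun j : 'I_n => g j + c)); last by move=> j _; apply: H.
by rewrite big_split /= sum_nat_const card_ord.
Qed.

Section S.
Variables (L p : nat).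
Hypothesis HL : L <= 5.
Hypothesis Hp : 0 < p.
Local Notation m := (M L p).+1.

Lemma decomp (f : nat -> nat) : \sum_(1 <= y < m) f y =
  \sum_(j < L) \sum_(i < 1) f (1 + j*1 + i) + \sum_(j < F L) \sum_(i < 4) f (L.+1 + j*4 + i)
  + \sum_(j < p) \sum_(i < 6) f ((K L).+1 + j*6 + i).
Proof.
rewrite (big_cat_nat (n := L.+1)) /=; try (rewrite /M /K; lia).
rewrite [\sum_(L.+1 <= i < _) _](big_cat_nat (n := (K L).+1)) /=; try (rewrite /M /K; lia).
rewrite addnA; congr (_ + _); [congr (_ + _)|]; apply: sum_blk'; rewrite /M /K; lia.
Qed.

Lemma Gsum_le (A : {set 'I_m}) :
  \sum_(1 <= y < m) Gf A y <= \sum_(1 <= y < m) 7 * An A y + 10 * An A 0.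
Proof.
rewrite !decomp.
have h1 : \sum_(j < L) \sum_(i < 1) Gf A (1 + j*1 + i) <=
   \sum_(j < L) \sum_(i < 1) 7 * An A (1 + j*1 + i) + L * (2 * An A 0).
  apply: (sum_le_const (f := fun j : nat => \sum_(i < 1) Gf A (1 + j*1 + i)) (g := fun j : nat => \sum_(i < 1) 7 * An A (1 + j*1 + i))) => j jL; rewrite !big_ord1 /= blk1; last by rewrite /leafn; lia.
  by move: (An A 0) (An A (1 + j*1 + 0)); do 2 case.
have h2 : \sum_(j < F L) \sum_(i < 4) Gf A (L.+1 + j*4 + i) <=
   \sum_(j < F L) \sum_(i < 4) 7 * An A (L.+1 + j*4 + i) + F L * (2 * An A 0).
  apply: (sum_le_const (f := fun j : nat => \sum_(i < 4) Gf A (L.+1 + j*4 + i)) (g := fun j : nat => \sum_(i < 4) 7 * An A (L.+1 + j*4 + i))) => j jF; rewrite blk5; first last.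
  - by have := jF; rewrite /M /K /F; lia.
  - by move=> i i4; exact: (ev5 HL Hp jF i4).
  rewrite !big_ord_recr big_ord0 /=.
  move: (An A 0) (An A (L.+1 + j*4 + 0)) (An A (L.+1 + j*4 + 1)) (An A (L.+1 + j*4 + 2)) (An A (L.+1 + j*4 + 3)).
  by do 5 case.
have h3 : \sum_(j < p) \sum_(i < 6) Gf A ((K L).+1 + j*6 + i) <=
   \sum_(j < p) \sum_(i < 6) 7 * An A ((K L).+1 + j*6 + i) + p * 0.
  apply: (sum_le_const (f := fun j : nat => \sum_(i < 6) Gf A ((K L).+1 + j*6 + i)) (g := fun j : nat => \sum_(i < 6) 7 * An A ((K L).+1 + j*6 + i))) => j jp; rewrite blk7; first last.
  - by rewrite /M; lia.
  - by move=> i i6; exact: (ev7 HL Hp jp i6).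
  rewrite !big_ord_recr big_ord0 /=.
  move: (An A 0) (An A ((K L).+1 + j*6 + 0)) (An A ((K L).+1 + j*6 + 1)) (An A ((K L).+1 + j*6 + 2))
   (An A ((K L).+1 + j*6 + 3)) (An A ((K L).+1 + j*6 + 4)) (An A ((K L).+1 + j*6 + 5)).
  by do 7 case.
have e : L * (2 * An A 0) + F L * (2 * An A 0) = 10 * An A 0.
  by rewrite -mulnDl /F subnKC // mulnA.
lia.

Qed.

Lemma rho_id (A : {set 'I_m}) :
  6 * (E0 A + E1 A) + 3 * \sum_(0 <= y < m) (An A y && leafn L y) = \sum_(1 <= y < m) Gf A y.
Proof.
rewrite /E0 /E1 /Gf !(big_ltn (ltn0Sn _)) /= ?andbF ?andFb /= !add0n.
rewrite mulnDr !big_distrr -!big_split; apply: eq_big_nat => y /andP[y0 _].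
by rewrite y0 !andbT.
Qed.

Lemma mcard_sum (B : {set 'I_m}) : #|B| = \sum_(0 <= y < m) An B y.
Proof.
rewrite -sum1_card big_mkcond /= big_mkord; apply: eq_bigr => x _.
by rewrite An_ord; case: (x \in B).
Qed.

Lemma An_leaf (A : {set 'I_m}) y : An (A :&: [set x : 'I_m | leafn L x]) y = An A y && leafn L y.
Proof.
rewrite /An !inE; case: (ltnP y m) => // ym.
by rewrite inordK // andbA.
Qed.

Lemma Gsum_wit (A : {set 'I_m}) : (forall y, y < m -> An A y = (y <= K L)) ->
  \sum_(1 <= y < m) Gf A y = \sum_(1 <= y < m) 7 * An A y + 10.
Proof.
move=> hA; have a1 : An A 0 = true by rewrite hA.
rewrite !decomp.
have h1 : \sum_(j < L) \sum_(i < 1) Gf A (1 + j*1 + i) =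
   \sum_(j < L) \sum_(i < 1) 7 * An A (1 + j*1 + i) + L * 2.
  apply: (sum_eq_const (f := fun j : nat => \sum_(i < 1) Gf A (1 + j*1 + i)) (g := fun j : nat => \sum_(i < 1) 7 * An A (1 + j*1 + i))) => j jL; rewrite !big_ord1 /= blk1; last by rewrite /leafn; lia.
  by rewrite a1 hA; [have -> : 1 + j * 1 + 0 <= K L by rewrite /K; lia | rewrite /M /K; lia].
have h2 : \sum_(j < F L) \sum_(i < 4) Gf A (L.+1 + j*4 + i) =
   \sum_(j < F L) \sum_(i < 4) 7 * An A (L.+1 + j*4 + i) + F L * 2.
  apply: (sum_eq_const (f := fun j : nat => \sum_(i < 4) Gf A (L.+1 + j*4 + i)) (g := fun j : nat => \sum_(i < 4) 7 * An A (L.+1 + j*4 + i))) => j jF; rewrite blk5; first last.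
  - by have := jF; rewrite /M /K /F; lia.
  - by move=> i i4; exact: (ev5 HL Hp jF i4).
  rewrite !big_ord_recr big_ord0 /= a1.
  have t i : i < 4 -> An A (L.+1 + j*4 + i) = true.
    by move=> i4; rewrite hA; have := jF; rewrite /M /K /F; lia.
  by rewrite !t.
have h3 : \sum_(j < p) \sum_(i < 6) Gf A ((K L).+1 + j*6 + i) =
   \sum_(j < p) \sum_(i < 6) 7 * An A ((K L).+1 + j*6 + i) + p * 0.
  apply: (sum_eq_const (f := fun j : nat => \sum_(i < 6) Gf A ((K L).+1 + j*6 + i)) (g := fun j : nat => \sum_(i < 6) 7 * An A ((K L).+1 + j*6 + i))) => j jp; rewrite blk7; first last.
  - by rewrite /M; lia.
  - by move=> i i6; exact: (ev7 HL Hp jp i6).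
  rewrite !big_ord_recr big_ord0 /=.
  have t i : i < 6 -> An A ((K L).+1 + j*6 + i) = false.
    by move=> i6; rewrite hA; rewrite /M; lia.
  by rewrite !t // ?andbF.
have e : L * 2 + F L * 2 = 10 by rewrite -mulnDl /F subnKC.
lia.
Qed.
End S.

Import Order.TTheory.

Section S.
Variables (L p : nat).
Hypothesis HL : L <= 5.
Hypothesis Hp : 0 < p.
Local Notation m := (M L p).+1.

Lemma rho_core (A : {set 'I_m}) :
  [/\ edges_in (@E L p) A = E0 A + E1 A,
      #|A| = An A 0 + \sum_(1 <= y < m) An A y &
      #|A :&: V1 (@E L p)| = \sum_(0 <= y < m) (An A y && leafn L y)].
Proof.
split.
- by rewrite /edges_in card_pairs (pairs_E HL Hp) mulKn.
- by rewrite (mcard_sum A) (big_ltn (ltn0Sn _)).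
- rewrite (V1E HL Hp) (mcard_sum (A :&: _)); apply: eq_bigr => y _; by rewrite An_leaf.
Qed.

Lemma rho_le (A : {set 'I_m}) : (rho3A (@E L p) A <= 3)%R.
Proof.
have [e1 e2 e3] := rho_core A.
have h1 := rho_id A.
have h2 := Gsum_le HL Hp A.
rewrite -big_distrr /= in h2.
have a1 : An A 0 <= 1 by case: (An A 0).
rewrite /rho3A e1 e2 e3.
lia.
Qed.

Lemma rho_wit : (rho3A (@E L p) [set x : 'I_m | (x <= K L)%N] = 3)%R.
Proof.
set A := [set x : 'I_m | (x <= K L)%N].
have hA : forall y, y < m -> An A y = (y <= K L).
  by move=> y ym; rewrite /An ym inE inordK.
have [e1 e2 e3] := rho_core A.
have h1 := rho_id A.
have h2 := Gsum_wit HL Hp hA.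
rewrite -big_distrr /= in h2.
have a1 : An A 0 = true by rewrite hA.
rewrite /rho3A e1 e2 e3.
lia.
Qed.

Lemma rho_eq : rho3 (@E L p) = 3%Z.
Proof.
apply/le_anti/andP; split.
  apply/bigmax_leP; split => // A _; exact: rho_le.
apply: (@le_trans _ _ (rho3A (@E L p) [set x : 'I_m | (x <= K L)%N])); first by rewrite rho_wit.
exact: le_bigmax.
Qed.

Lemma V1card : #|V1 (@E L p)| = L.
Proof.
rewrite (V1E HL Hp) mcard_sum (big_ltn (ltn0Sn _)).
rewrite (eq_big_nat _ _ (F2 := fun y => (leafn L y : nat))); last first.
  by move=> y /andP[_ ym]; rewrite /An ym inE inordK.
rewrite (decomp HL Hp (fun y => (leafn L y : nat))).
have -> : An [set x : 'I_m | leafn L x] 0 = false by rewrite /An inE inordK.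
rewrite (eq_bigr (fun _ => 1)); last first.
  by move=> j _; rewrite big_ord1 /= /leafn; have := ltn_ord j; lia.
rewrite [\sum_(j < F L) _]big1; last first.
  move=> j _; apply: big1 => i _.
  by have [-> _ _] := ev5 HL Hp (ltn_ord j) (ltn_ord i).
rewrite [\sum_(j < p) _]big1; last first.
  move=> j _; apply: big1 => i _.
  by have [-> _ _] := ev7 HL Hp (ltn_ord j) (ltn_ord i).
by rewrite sum_nat_const card_ord muln1 !addn0.
Qed.
End S.

Lemma sum_le_c n (f : nat -> nat) c : (forall j, j < n -> f j <= c) ->
  \sum_(j < n) f j <= n * c.
Proof.
move=> H; have h : \sum_(j < n) f j <= \sum_(j < n) c by apply: leq_sum => j _; apply: H.
by rewrite sum_nat_const card_ord in h.
Qed.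

Section S.
Variables (L p : nat).
Hypothesis HL : L <= 5.
Hypothesis Hp : 0 < p.
Local Notation m := (M L p).+1.
Variable c : 'I_m -> 'I_3.
Hypothesis prop : forall x y, @E L p x y -> c x != c y.

Definition Sn y := An [set x : 'I_m | c x == c ord0] y.

Lemma endc y : 0 < y < m -> endpt L y -> ~~ Sn y.
Proof.
move=> /andP[y0 ym] ey; rewrite /Sn /An ym inE /=.
have h : @E L p ord0 (inord y) by rewrite /E /= inordK // adj0 y0 ey.
by rewrite eq_sym; apply: prop.
Qed.

Lemma consc y : 0 < y -> ~~ endn L y -> y.+1 < m -> ~~ (Sn y && Sn y.+1).
Proof.
move=> y0 ne ym; rewrite /Sn /An ym (ltnW ym) !inE /=.
have h : @E L p (inord y) (inord y.+1).
  by rewrite /E /= !inordK ?(ltnW ym) // /adjn y0 ne eqxx !orbT.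
apply/negP => /andP[/eqP h1 /eqP h2].
by move: (prop h); rewrite h1 h2 eqxx.
Qed.

Lemma cblk7 b : (forall i, i < 6 -> [/\ leafn L (b+i) = false, startn L (b+i) = (i == 0) & endn L (b+i) = (i == 5)]) ->
  0 < b -> b + 5 < m -> \sum_(i < 6) Sn (b + i) <= 2.
Proof.
move=> H b0 bm.
rewrite !big_ord_recr !big_ord0 /=.
have [_ s0 _] := H 0 isT.
have [_ _ e1] := H 1 isT.
have [_ _ e2] := H 2 isT.
have [_ _ e3] := H 3 isT.
have [_ _ e5] := H 5 isT.
have -> : Sn (b + 0) = false.
  by apply/negbTE; apply: endc; [lia | rewrite /endpt s0].
have -> : Sn (b + 5) = false.
  by apply/negbTE; apply: endc; [lia | rewrite /endpt e5 orbT].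
have c12 : ~~ (Sn (b + 1) && Sn (b + 2)).
  by rewrite [b + 2]addnS; apply: consc; rewrite ?e1 //; lia.
have c23 : ~~ (Sn (b + 2) && Sn (b + 3)).
  by rewrite [b + 3]addnS; apply: consc; rewrite ?e2 //; lia.
have c34 : ~~ (Sn (b + 3) && Sn (b + 4)).
  by rewrite [b + 4]addnS; apply: consc; rewrite ?e3 //; lia.
move: c12 c23 c34; move: (Sn (b + 1)) (Sn (b + 2)) (Sn (b + 3)) (Sn (b + 4)).
by do 4 case.
Qed.

Lemma cblk5 b : (forall i, i < 4 -> [/\ leafn L (b+i) = false, startn L (b+i) = (i == 0) & endn L (b+i) = (i == 3)]) ->
  0 < b -> b + 3 < m -> \sum_(i < 4) Sn (b + i) <= 1.
Proof.
move=> H b0 bm.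
rewrite !big_ord_recr !big_ord0 /=.
have [_ s0 _] := H 0 isT.
have [_ _ e1] := H 1 isT.
have [_ _ e3] := H 3 isT.
have -> : Sn (b + 0) = false.
  by apply/negbTE; apply: endc; [lia | rewrite /endpt s0].
have -> : Sn (b + 3) = false.
  by apply/negbTE; apply: endc; [lia | rewrite /endpt e3 orbT].
have c12 : ~~ (Sn (b + 1) && Sn (b + 2)).
  by rewrite [b + 2]addnS; apply: consc; rewrite ?e1 //; lia.
move: c12; move: (Sn (b + 1)) (Sn (b + 2)).
by do 2 case.
Qed.

Lemma class_bound : #|[set x : 'I_m | c x == c ord0]| <= 1 + F L + p * 2.
Proof.
rewrite mcard_sum (big_ltn (ltn0Sn _)).
have -> : \sum_(1 <= y < m) An [set x : 'I_m | c x == c ord0] y = \sum_(1 <= y < m) Sn y by [].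
rewrite (decomp HL Hp Sn).
have h1 : \sum_(j < L) \sum_(i < 1) Sn (1 + j*1 + i) <= L * 0.
  apply: (sum_le_c (f := fun j : nat => \sum_(i < 1) Sn (1 + j*1 + i))) => j jL.
  rewrite big_ord1 /= leqn0 eqb0; apply: endc; first by rewrite /M /K; lia.
  have l : leafn L (1 + j*1 + 0) by rewrite /leafn; lia.
  by rewrite /endpt (evl l).1.
have h2 : \sum_(j < F L) \sum_(i < 4) Sn (L.+1 + j*4 + i) <= F L * 1.
  apply: (sum_le_c (f := fun j : nat => \sum_(i < 4) Sn (L.+1 + j*4 + i))) => j jF.
  apply: cblk5; first by move=> i i4; exact: (ev5 HL Hp jF i4).
    by [].
  by have := jF; rewrite /M /K /F; lia.
have h3 : \sum_(j < p) \sum_(i < 6) Sn ((K L).+1 + j*6 + i) <= p * 2.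
  apply: (sum_le_c (f := fun j : nat => \sum_(i < 6) Sn ((K L).+1 + j*6 + i))) => j jp.
  apply: cblk7; first by move=> i i6; exact: (ev7 HL Hp jp i6).
    by [].
  by rewrite /M; lia.
have a1 : An [set x : 'I_m | c x == c ord0] 0 <= 1 by case: (An _ _).
lia.
Qed.
End S.

Lemma sum_classes n (c : 'I_n -> 'I_3) : \sum_(i : 'I_3) #|[set x | c x == i]| = n.
Proof.
transitivity (\sum_(i : 'I_3) \sum_(x : 'I_n) (c x == i : nat)).
  apply: eq_bigr => i _; rewrite -sum1_card big_mkcond /=; apply: eq_bigr => x _.
  by rewrite inE; case: (c x == i).
rewrite exchange_big /= (eq_bigr (fun _ => 1)); last first.
  move=> x _; rewrite (bigD1 (c x)) //= eqxx big1 // => i /negbTE.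
  by rewrite eq_sym => ->.
by rewrite sum_nat_const card_ord muln1.
Qed.

Lemma noeq L p : L <= 5 -> 0 < p -> ~ (exists c : 'I_(M L p).+1 -> 'I_3, equitable_coloring (@E L p) c).
Proof.
move=> HL Hp [c [prop bal]].
have cb := class_bound HL Hp prop.
have := sum_classes c.
rewrite (bigD1 (c ord0)) //=.
set k := #|[set x | c x == c ord0]|.
have h : \sum_(i | i != c ord0) #|[set x | c x == i]| <= \sum_(i : 'I_3 | i != c ord0) (k + 1).
  by apply: leq_sum => i _; apply: bal.
rewrite sum_nat_const cardC1 card_ord /= in h.
move=> eqm.
have : (M L p).+1 <= k + 2 * (k + 1).
  by rewrite -eqm leq_add2l.
rewrite /M /K /F -/k in cb *; lia.
Qed.

Theorem mainTheorem3 :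
  forall n l : nat, l <= 5 ->
  exists (m : nat) (e : rel 'I_m),
    simple_graph e /\ triangle_free e /\ outerplanar e /\
    n < m /\ #|V1 e| = l /\ rho3 e = 3%Z /\
    ~ (exists c : 'I_m -> 'I_3, equitable_coloring e c).
Proof.
move=> n l hl.
have hp : 0 < n.+1 by [].
exists (M l n.+1).+1, (@E l n.+1).
split; [split|split; [|split; [|split; [|split; [|split]]]]].
- by move=> x y; rewrite /E adjnC.
- by move=> x; rewrite /E (@adjn_irr l n.+1 hl hp).
- by move=> x y z; apply: (@tri l n.+1 hl hp).
- exists (fun x => nat_of_ord x); split; first exact: val_inj.
  by move=> a b c d; apply: (@outer l n.+1 hl hp).
- by rewrite /M; lia.
- exact: (@V1card l n.+1 hl hp).
- exact: (@rho_eq l n.+1 hl hp).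
- exact: (@noeq l n.+1 hl hp).
Qed.
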